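(* Let $Q$ be a good quantifier of type $\langle k\rangle$ on $\mathbb{N}$. Then for every $n$ and every $a\in\mathbb{N}^n$, the orbit $\{g(a):g\in\mathrm{Aut}(Q)\}$ is definable in $\mathscr{L}_{\omega\omega}(Q)$.
   Context: A quantifier of type $\langle k\rangle$ on $\mathbb{N}$ is a set $Q\subseteq 2^{\mathbb{N}^k}$ (a family of subsets of $\mathbb{N}^k$; $2^{\mathbb{N}^k}$ carries the product topology). $Q$ is downwards closed if it is closed under subsets. For a map $p$ and $A\subseteq\mathbb{N}^k$, $p(A)=\{(p(a_1),\dots,p(a_k)):(a_1,\dots,a_k)\in A\}$. For $Q$ closed and downwards closed, a function $p:n\to\mathbb{N}$ (where $n=\{0,\dots,n-1\}$) is compatible with $Q$ if for every $A\subseteq n^k$, $A\in Q\iff p(A)\in Q$. A permutation $f$ of $\mathbb{N}$ fixes (leaves invariant) $Q$ if $A\in Q\iff f(A)\in Q$ for all $A\subseteq\mathbb{N}^k$; $\mathrm{Aut}(Q)$ is the group of such permutations, acting on tuples coordinatewise. $Q$ is good if it is closed, downwards closed, and every finite injection $p:n\to\mathbb{N}$ compatible with $Q$ extends to a permutation of $\mathbb{N}$ fixing $Q$. $\mathscr{L}_{\omega\omega}(Q)$ is first-order logic extended by formulas $Qx\,\varphi(x,y)$ ($x$ a $k$-tuple of variables) with $\mathbb{N}\models Qx\,\varphi(x,b)$ iff $\{a\in\mathbb{N}^k:\mathbb{N}\models\varphi(a,b)\}\in Q$. A set $B\subseteq\mathbb{N}^n$ is definable in $\mathscr{L}_{\omega\omega}(Q)$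 if there is a formula $\varphi(x_1,\dots,x_n)$ whose only non-logical symbol is $Q$ such that $b\in B\iff\mathbb{N}\models\varphi(b)$. *)

(* Defs.v *)
From mathcomp Require Import all_boot.
Set Implicit Arguments. Unset Strict Implicit. Unset Printing Implicit Defensive.

Definition quant (k : nat) := (k.-tuple nat -> Prop) -> Prop.

Definition img (k : nat) (p : nat -> nat) (A : k.-tuple nat -> Prop)
  : k.-tuple nat -> Prop :=
  fun x => exists t, A t /\ x = map_tuple p t.

Definition down_closed (k : nat) (Q : quant k) : Prop :=
  forall A B : k.-tuple nat -> Prop, Q A -> (forall x, B x -> A x) -> Q B.

(* closed in the product topology on 2^(N^k): A is in Q whenever every basic
   neighbourhood of A (determined by a finite set F of points) meets Q. *)
Definition closed_q (k : nat) (Q : quant k) : Prop :=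
  forall A : k.-tuple nat -> Prop,
    (forall F : seq (k.-tuple nat),
        exists B, Q B /\ forall x, x \in F -> (A x <-> B x)) ->
    Q A.

Definition sub_nk (k n : nat) (A : k.-tuple nat -> Prop) : Prop :=
  forall t, A t -> all (fun i => i < n) t.

(* p : n -> N compatible with Q (only the values of p on {0..n-1} matter) *)
Definition compatible (k : nat) (Q : quant k) (n : nat) (p : nat -> nat) : Prop :=
  forall A, sub_nk n A -> (Q A <-> Q (img p A)).

Definition fixes (k : nat) (Q : quant k) (f : nat -> nat) : Prop :=
  forall A, Q A <-> Q (img f A).

Definition aut (k : nat) (Q : quant k) (f : nat -> nat) : Prop :=
  bijective f /\ fixes Q f.

Definition good (k : nat) (Q : quant k) : Prop :=
  closed_q Q /\ down_closed Q /\
  forall (n : nat) (p : nat -> nat),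
    (forall i j, i < n -> j < n -> p i = p j -> i = j) ->
    compatible Q n p ->
    exists f, aut Q f /\ forall i, i < n -> f i = p i.

Inductive form (k : nat) : Type :=
| FEq  : nat -> nat -> form k
| FNot : form k -> form k
| FAnd : form k -> form k -> form k
| FEx  : nat -> form k -> form k
| FQ   : k.-tuple nat -> form k -> form k.

Definition upd1 (e : nat -> nat) (v a : nat) : nat -> nat :=
  fun i => if i == v then a else e i.

Fixpoint upd (e : nat -> nat) (vs xs : seq nat) : nat -> nat :=
  match vs, xs with
  | v :: vs', x :: xs' => upd (upd1 e v x) vs' xs'
  | _, _ => e
  end.

Fixpoint sat (k : nat) (Q : quant k) (e : nat -> nat) (phi : form k) : Prop :=
  match phi with
  | FEq i j => e i = e j
  | FNot psi => ~ sat Q e psi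
  | FAnd psi chi => sat Q e psi /\ sat Q e chi
  | FEx v psi => exists a, sat Q (upd1 e v a) psi
  | FQ vs psi => Q (fun a : k.-tuple nat => sat Q (upd e vs a) psi)
  end.

(* B subset of N^n is definable (without parameters) in L_{omega omega}(Q):
   some formula phi(x_0,...,x_{n-1}) with free variables among 0..n-1
   (its truth value does not depend on the other variables). *)
Definition definable (k : nat) (Q : quant k) (n : nat)
  (B : n.-tuple nat -> Prop) : Prop :=
  exists phi : form k, forall (b : n.-tuple nat) (e : nat -> nat),
    (forall i, i < n -> e i = nth 0 b i) -> (B b <-> sat Q e phi).

Definition aut_orbit (k : nat) (Q : quant k) (n : nat) (a : n.-tuple nat)
  : n.-tuple nat -> Prop :=
  fun b => exists g, aut Q g /\ b = map_tuple g a.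

(* Main.v *)
Require Import Defs.
From mathcomp Require Import all_boot.
From Stdlib Require Import Classical ClassicalEpsilon.
Set Implicit Arguments. Unset Strict Implicit.

Lemma upd_iota m s e ys i : size ys = m ->
  upd e (iota s m) ys i = if (s <= i) && (i < s + m) then nth 0 ys (i - s) else e i.
Proof.
elim: m s e ys => [|m IH] s e [|y ys] //= Hs.
- by rewrite addn0 andbC ltnNge andNb.
- rewrite IH; last by case: Hs.
  rewrite /upd1 addSnnS; case: (ltngtP i s) => H.
  + by [].
  + by rewrite /= -(subnSK H).
  + subst i; by rewrite subnn -addSnnS ltnS leq_addr.
Qed.

Lemma le_sumn (s : seq nat) x : x \in s -> x <= sumn s.
Proof.
elim: s => [|y s IH] //=; rewrite in_cons => /orP [/eqP->|H].
- exact: leq_addr.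
- exact: leq_trans (IH H) (leq_addl _ _).
Qed.
Section Forms.
Variable k : nat.
Variable Q : quant k.

Definition FTrue : form k := FEq k 0 0.
Definition FOr (p q : form k) : form k := FNot (FAnd (FNot p) (FNot q)).
Definition bigAnd (X : Type) (f : X -> form k) (l : seq X) : form k :=
  foldr (fun x acc => FAnd (f x) acc) FTrue l.
Definition bigOr (X : Type) (f : X -> form k) (l : seq X) : form k :=
  foldr (fun x acc => FOr (f x) acc) (FNot FTrue) l.
Definition FExs (vs : seq nat) (phi : form k) : form k := foldr (@FEx k) phi vs.

Lemma sat_bigAnd (X : eqType) (f : X -> form k) l e :
  sat Q e (bigAnd f l) <-> forall x, x \in l -> sat Q e (f x).
Proof.
elim: l => [|y l IH] /=; first by split.
rewrite IH; split.
- by move=> [H1 H2] x; rewrite in_cons => /orP [/eqP->|]; auto.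
- by move=> H; split; [apply: H; rewrite in_cons eqxx | move=> x Hx; apply: H; rewrite in_cons Hx orbT].
Qed.

Lemma sat_bigOr (X : eqType) (f : X -> form k) l e :
  sat Q e (bigOr f l) <-> exists2 x, x \in l & sat Q e (f x).
Proof.
elim: l => [|y l IH] /=; first by split; [move=> H; case: H | case].
split.
- move=> H; apply: NNPP => H'; apply: H; split => H1; apply: H'.
  + by exists y; rewrite ?in_cons ?eqxx.
  + move/IH: H1 => [x Hx Hs]; exists x => //; by rewrite in_cons Hx orbT.
- move=> [x]; rewrite in_cons => /orP [/eqP->|Hx] Hs [H1 H2].
  + exact: H1.
  + by apply: H2; apply/IH; exists x.
Qed.

Lemma sat_FExs vs phi e :
  sat Q e (FExs vs phi) <-> exists ys, size ys = size vs /\ sat Q (upd e vs ys) phi.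
Proof.
elim: vs e => [|v vs IH] e /=.
- split; [by move=> H; exists [::] | by move=> [[|y ys] [Hs H]]].
- split.
  + move=> [x /IH [ys [Hs H]]]; exists (x :: ys) => /=; by rewrite Hs.
  + move=> [[|y ys] [//= Hs H]]; exists y; apply/IH; exists ys; split => //; by case: Hs.
Qed.

End Forms.
Fixpoint allseq (M k : nat) : seq (seq nat) :=
  if k is k'.+1 then [seq x :: s | x <- iota 0 M, s <- allseq M k'] else [:: [::]].

Lemma allseq_mem1 M k t : t \in allseq M k -> size t = k /\ all (fun x => x < M) t.
Proof.
elim: k t => [|k IH] t /=; first by rewrite inE => /eqP->.
move/allpairsP => [[x s] [/= Hx Hs ->]]; have [H1 H2] := IH _ Hs.
by rewrite /= H1 H2 andbT; move: Hx; rewrite mem_iota.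
Qed.

Lemma allseq_mem2 M k t : size t = k -> all (fun x => x < M) t -> t \in allseq M k.
Proof.
elim: k t => [|k IH] [|x t] //= Hs /andP [Hx Ht].
apply: (allpairs_f (fun x s => x :: s)); first by rewrite mem_iota.
by apply: IH => //; case: Hs.
Qed.

Fixpoint subs (T : Type) (l : seq T) : seq (seq T) :=
  if l is x :: l' then [seq x :: s | s <- subs l'] ++ subs l' else [:: [::]].

Lemma subs_sub (T : eqType) (l s : seq T) : s \in subs l -> {subset s <= l}.
Proof.
elim: l s => [|x l IH] s /=; first by rewrite inE => /eqP-> .
rewrite mem_cat => /orP [/mapP [s' Hs' ->]|Hs] y.
- rewrite !in_cons => /orP [->//|Hy]; by rewrite (IH _ Hs' _ Hy) orbT.
- by move=> Hy; rewrite in_cons (IH _ Hs _ Hy) orbT.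
Qed.

Lemma subs_ex (T : eqType) (l : seq T) (P : T -> Prop) :
  exists2 s, s \in subs l & forall t, t \in s <-> (t \in l /\ P t).
Proof.
elim: l => [|x l [s Hs IH]] /=.
- by exists [::] => // t; split => // [[]].
- case: (classic (P x)) => Px.
  + exists (x :: s); first by rewrite mem_cat map_f.
    move=> t; rewrite !in_cons; split.
    * move=> /orP [/eqP->|/IH [-> Pt]]; first by rewrite eqxx.
      by rewrite orbT.
    * move=> [/orP [/eqP->|Ht] Pt]; first by rewrite eqxx.
      by apply/orP; right; apply/IH.
  + exists s; first by rewrite mem_cat Hs orbT.
    move=> t; rewrite IH in_cons; split.
    * by move=> [-> Pt]; rewrite orbT.
    * move=> [/orP [/eqP Ht|Ht] Pt]; last by [].
      by subst t.
Qed.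
Definition pb (P : Prop) : bool := if excluded_middle_informative P then true else false.
Lemma pbP P : pb P = true <-> P.
Proof. by rewrite /pb; case: excluded_middle_informative. Qed.

Lemma Qext k (Q : quant k) : down_closed Q ->
  forall A B, (forall x, A x <-> B x) -> (Q A <-> Q B).
Proof. move=> HD A B H; split => HQ; apply: (HD _ _ HQ) => x; apply H. Qed.

Section Main.
Variable k : nat.
Variable Q : quant k.
Hypothesis HD : down_closed Q.
Variable n : nat.
Variable a : n.-tuple nat.

Definition M := (sumn a).+1.
Definition full := allseq M k.
Definition vt : k.-tuple nat := Tuple (introT eqP (size_iota (n + M) k)).
Definition psi (s : seq (seq nat)) : form k :=
  bigOr (fun t => bigAnd (fun i => FEq k (n + M + i) (n + nth 0 t i)) (iota 0 k)) s.
Definition QF s : form k := FQ vt (psi s).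
Definition As (s : seq (seq nat)) : k.-tuple nat -> Prop := fun u => val u \in s.

Lemma E_y e ys j : size ys = M -> j < M -> upd e (iota n M) ys (n + j) = nth 0 ys j.
Proof. by move=> Hs Hj; rewrite upd_iota // leq_addr ltn_add2l Hj addKn. Qed.

Lemma E'_y E (x : k.-tuple nat) j : j < M -> upd E (iota (n + M) k) x (n + j) = E (n + j).
Proof.
move=> Hj; rewrite upd_iota ?size_tuple //.
by rewrite leq_add2l leqNgt Hj.
Qed.

Lemma E'_x E (x : k.-tuple nat) i : i < k -> upd E (iota (n + M) k) x (n + M + i) = nth 0 x i.
Proof.
by move=> Hi; rewrite upd_iota ?size_tuple // leq_addr ltn_add2l Hi addKn.
Qed.

Lemma QF_sem e ys (p : nat -> nat) s : size ys = M ->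
  (forall j, j < M -> p j = nth 0 ys j) -> s \in subs full ->
  sat Q (upd e (iota n M) ys) (QF s) <-> Q (img p (As s)).
Proof.
move=> Hys Hp Hs; have HE := E_y e Hys.
move: (upd e (iota n M) ys) HE => E HE /=; apply: Qext => // x.
rewrite sat_bigOr; split.
- move=> [t Ht /sat_bigAnd Hi].
  have [Hsz Hall] := allseq_mem1 (subs_sub Hs Ht).
  exists (Tuple (introT eqP Hsz)); split => //.
  apply: val_inj => /=; apply: (@eq_from_nth _ 0); first by rewrite size_map size_tuple Hsz.
  move=> i; rewrite size_tuple => Hik.
  have Hti : nth 0 t i < M by apply: (allP Hall); apply: mem_nth; rewrite Hsz.
  rewrite (nth_map 0) ?Hsz // Hp //.
  have := Hi i; rewrite mem_iota add0n => /(_ Hik) /=.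
  by rewrite E'_x // E'_y // HE.
- move=> [u [Hu ->]]; exists (val u) => //; apply/sat_bigAnd => i.
  rewrite mem_iota add0n => Hik /=.
  have [Hsz Hall] := allseq_mem1 (subs_sub Hs Hu).
  have Hti : nth 0 u i < M by apply: (allP Hall); apply: mem_nth; rewrite Hsz.
  rewrite E'_x ?size_tuple // E'_y // HE //.
  by rewrite (nth_map 0) ?size_tuple // Hp.
Qed.
End Main.
Lemma img_ext k (p : nat -> nat) (A B : k.-tuple nat -> Prop) :
  (forall u, A u <-> B u) -> forall x, img p A x <-> img p B x.
Proof. by move=> H x; split => [[t [Ht ->]]|[t [Ht ->]]]; exists t; split => //; apply/H. Qed.

Lemma pbF P : pb P = false -> ~ P.
Proof. by move=> H HP; move/pbP: HP; rewrite H. Qed.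

Section Main2.
Variable k : nat.
Variable Q : quant k.
Hypothesis HD : down_closed Q.
Hypothesis HC : forall (n : nat) (p : nat -> nat),
    (forall i j, i < n -> j < n -> p i = p j -> i = j) ->
    compatible Q n p ->
    exists f, aut Q f /\ forall i, i < n -> f i = p i.
Variable n : nat.
Variable a : n.-tuple nat.

Definition Comp : form k := bigAnd (fun s => if pb (Q (As s)) then QF k a s else FNot (QF k a s))
   (subs (full k a)).
Definition Dist : form k := bigAnd (fun i => bigAnd (fun j => if i == j then FTrue k
   else FNot (FEq k (n + i) (n + j))) (iota 0 (M a))) (iota 0 (M a)).
Definition Link : form k := bigAnd (fun i => FEq k i (n + nth 0 a i)) (iota 0 n).
Definition Phi : form k := FExs (iota n (M a)) (FAnd Dist (FAnd Link Comp)).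

Lemma E_x e ys i : size ys = M a -> i < n -> upd e (iota n (M a)) ys i = e i.
Proof. by move=> Hs Hi; rewrite upd_iota // leqNgt Hi. Qed.

Lemma a_lt i : i < n -> nth 0 a i < M a.
Proof. by move=> Hi; rewrite ltnS; apply: le_sumn; apply: mem_nth; rewrite size_tuple. Qed.

Lemma main (b : n.-tuple nat) e : (forall i, i < n -> e i = nth 0 b i) ->
  (aut_orbit Q a b <-> sat Q e Phi).
Proof.
move=> Heb; rewrite /Phi sat_FExs size_iota; split.
- move=> [g [[Hbij Hfix] Eb]].
  have Hg : forall j, j < M a -> nth 0 (map g (iota 0 (M a))) j = g j.
    by move=> j Hj; rewrite (nth_map 0) ?size_iota // nth_iota.
  exists (map g (iota 0 (M a))); rewrite size_map size_iota; split => //.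
  have Hs : size (map g (iota 0 (M a))) = M a by rewrite size_map size_iota.
  have HCo : sat Q (upd e (iota n (M a)) (map g (iota 0 (M a)))) Comp.
    apply/sat_bigAnd => s Hsub.
    case Hpb: (pb _).
    - change (sat Q (upd e (iota n (M a)) (map g (iota 0 (M a)))) (QF k a s)).
      apply/(QF_sem HD _ Hs (fun j Hj => esym (Hg j Hj)) Hsub) => //; apply: (proj1 (Hfix (As s))); apply/pbP; exact: Hpb.
    - change (~ sat Q (upd e (iota n (M a)) (map g (iota 0 (M a)))) (QF k a s)).
      move=> H; apply: (pbF Hpb); apply: (proj2 (Hfix (As s))); apply/(QF_sem HD _ Hs (fun j Hj => esym (Hg j Hj)) Hsub); exact: H.
  have Ey := E_y e Hs; have Ex := E_x e Hs.
  move: (upd e _ _) Ey Ex HCo => E Ey Ex HCo.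
  split; [|split => //].
  + apply/sat_bigAnd => i; rewrite mem_iota add0n => Hi.
    apply/sat_bigAnd => j; rewrite mem_iota add0n => Hj.
    case: eqP => [_ //|Hij] /=.
    rewrite (Ey _ Hi) (Ey _ Hj) !Hg // => /(bij_inj Hbij); exact: Hij.
  + apply/sat_bigAnd => i; rewrite mem_iota add0n => Hi /=.
    rewrite (Ex _ Hi) (Ey _ (a_lt Hi)) Hg ?a_lt // Heb //.
    by rewrite Eb (nth_map 0) ?size_tuple.
- move=> [ys [Hys HH0]].
  have [HDi [HLi HCo]] : sat Q (upd e (iota n (M a)) ys) Dist /\ sat Q (upd e (iota n (M a)) ys) Link /\
    sat Q (upd e (iota n (M a)) ys) Comp := HH0.
  set p := fun j => nth 0 ys j.
  have Hp : forall j, j < M a -> p j = nth 0 ys j by [].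
  have Hinj : forall i j, i < M a -> j < M a -> p i = p j -> i = j.
    move=> i j Hi Hj Hpij; apply: NNPP => Hij.
    move/sat_bigAnd: HDi => /(_ i); rewrite mem_iota add0n => /(_ Hi).
    move/sat_bigAnd => /(_ j); rewrite mem_iota add0n => /(_ Hj).
    case: eqP => [//|_] HH; apply: HH.
    change (upd e (iota n (M a)) ys (n + i) = upd e (iota n (M a)) ys (n + j)).
    by rewrite (E_y _ Hys Hi) (E_y _ Hys Hj).
  have Hcomp : compatible Q (M a) p.
    move=> A HA.
    have [s Hsub Hs] := subs_ex (full k a) (fun t => exists u : k.-tuple nat, val u = t /\ A u).
    have HAs : forall u, A u <-> As s u.
      move=> u; rewrite /As; split.
      - move=> Au; apply/Hs; split; last by exists u.
        by apply: allseq_mem2; [rewrite size_tuple | apply: HA].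
      - move/Hs => [_ [u' [Hu' Au']]]; by rewrite -(val_inj Hu').
    rewrite (Qext HD HAs) (Qext HD (img_ext p HAs)).
    move/sat_bigAnd: HCo => /(_ s Hsub).
    case Hpb: (pb _).
    + change (sat Q (upd e (iota n (M a)) ys) (QF k a s) -> (Q (As s) <-> Q (img p (As s)))).
      move=> /(QF_sem HD _ Hys Hp Hsub) H; split => // _; exact/pbP.
    + change (~ sat Q (upd e (iota n (M a)) ys) (QF k a s) -> (Q (As s) <-> Q (img p (As s)))).
      move=> H; split => H'; first by case: (pbF Hpb).
      by case: H; apply/(QF_sem HD _ Hys Hp Hsub).
  have [f [Hf Hfp]] := HC Hinj Hcomp.
  exists f; split => //.
  apply: val_inj => /=; apply: (@eq_from_nth _ 0); first by rewrite size_map !size_tuple.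
  move=> i; rewrite size_tuple => Hi.
  rewrite (nth_map 0) ?size_tuple // Hfp ?a_lt // -Heb //.
  move/sat_bigAnd: HLi => /(_ i); rewrite mem_iota add0n => /(_ Hi) HH.
  change (upd e (iota n (M a)) ys i = upd e (iota n (M a)) ys (n + nth 0 a i)) in HH.
  by rewrite -(E_x e Hys Hi) HH (E_y e Hys (a_lt Hi)).
Qed.
End Main2.

Theorem proposition12 (k : nat) (Q : quant k) (HQ : good Q)
  (n : nat) (a : n.-tuple nat) : definable Q (aut_orbit Q a).
Proof.
case: HQ => _ [HD HC]; exists (Phi Q a) => b e Heb; exact: main.
Qed.
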